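(* Let $a,b,c$ be positive real numbers and $n\geq1$ an integer. For $i=1,\dots,n$ define \[ f_i(x_1,\ldots,x_n)=\frac{a}{1-x_i}-\frac{b}{x_i}-\sum_{j\neq i}\frac{c}{x_i-x_j}, \] and let $U=\{(x_1,\ldots,x_n)\in\mathbb{R}^n:0<x_1<x_2<\cdots<x_n<1\}$. Let $v$ be a point of the boundary $\partial U$. Then for every sequence $(u_k)$ of points of $U$ converging to $v$, there exists $i\in\{1,\dots,n\}$ such that $\lim_{k\to\infty}|f_i(u_k)|=\infty$.
   Context: When $n=1$ the sum over $j\neq i$ is empty (zero). *)

(* Defs.v *)
(* Points of R^n are row vectors 'rV[R]_n with the
   canonical (product / max-norm) topology. *)
From HB Require Import structures.
From mathcomp Require Import all_boot all_order all_algebra.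
From mathcomp Require Import all_classical all_reals all_analysis.
Set Implicit Arguments. Unset Strict Implicit. Unset Printing Implicit Defensive.
Import Order.TTheory GRing.Theory Num.Theory.
Import numFieldNormedType.Exports.
Local Open Scope ring_scope.
Local Open Scope classical_set_scope.

Definition boundary (T : topologicalType) (A : set T) : set T :=
  closure A `\` interior A.

Definition fcomp (R : realType) (n : nat) (a b c : R) (i : 'I_n)
  (x : 'rV[R]_n) : R :=
  a / (1 - x ord0 i) - b / x ord0 i
  - \sum_(j < n | j != i) c / (x ord0 i - x ord0 j).

Definition Uset (R : realType) (n : nat) : set 'rV[R]_n :=
  [set x | (forall i : 'I_n, 0 < x ord0 i < 1) /\
           (forall i j : 'I_n, (i < j)%N -> x ord0 i < x ord0 j)].

(* Main.v *)
Require Import Defs.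
From HB Require Import structures.
From mathcomp Require Import all_boot all_order all_algebra.
From mathcomp Require Import all_classical all_reals all_analysis.
From mathcomp Require Import zify ring lra.
Import Order.TTheory GRing.Theory Num.Theory.
Import numFieldNormedType.Exports.
Local Open Scope ring_scope.
Local Open Scope classical_set_scope.

Lemma divle (R : realFieldType) (c d e : R) :
  0 < c -> 0 < e -> e <= d -> c / d <= c / e.
Proof.
move=> hc he hed; apply: ler_wpM2l; first exact: ltW.
rewrite lef_pV2 ?posrE //; exact: lt_le_trans hed.
Qed.

Arguments divle {R c d e}.

Lemma ord_min n (P : 'I_n -> Prop) : (exists i, P i) ->
  exists i, P i /\ forall j : 'I_n, (j < i)%N -> ~ P j.
Proof.
move=> [i Pi].
suff H : forall N (k : 'I_n), (k < N)%N -> P k ->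
    exists i, P i /\ forall j : 'I_n, (j < i)%N -> ~ P j.
  exact: (H i.+1 i).
elim=> [//|N IH] k kN Pk.
case: (pselect (exists j : 'I_n, (j < k)%N /\ P j)) => [[j [jk Pj]]|nj].
  apply: (IH j) => //; exact: leq_trans jk kN.
by exists k; split=> // j jk Pj; apply: nj; exists j.
Qed.

Lemma ord_max n (P : 'I_n -> Prop) : (exists i, P i) ->
  exists i, P i /\ forall j : 'I_n, (i < j)%N -> ~ P j.
Proof.
move=> [i Pi].
have [j [Pj jmin]] := @ord_min n (fun j => P (rev_ord j)) (ex_intro _ (rev_ord i) (eq_ind _ P Pi _ (esym (rev_ordK i)))).
exists (rev_ord j); split=> // l jl Pl.
apply: (jmin (rev_ord l)); last by rewrite rev_ordK.
move: jl; rewrite /= => jl.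
have := ltn_ord l; have := ltn_ord j; lia.
Qed.

Lemma sub_sum (R : realFieldType) n (P : pred 'I_n) (g : 'I_n -> R) :
  (forall j, 0 <= g j) -> \sum_(j < n | P j) g j <= \sum_(j < n) g j.
Proof.
move=> g0; rewrite [X in _ <= X](bigID P) /= lerDl; exact: sumr_ge0.
Qed.

Theorem lemma6p1 (R : realType) (n : nat) (a b c : R)
  (ha : 0 < a) (hb : 0 < b) (hc : 0 < c) (hn : (0 < n)%N)
  (v : 'rV[R]_n) (hv : boundary (@Uset R n) v)
  (u : nat -> 'rV[R]_n) (hu : forall k, @Uset R n (u k))
  (huv : u @ \oo --> v) :
  exists i : 'I_n, (fun k => `|fcomp a b c i (u k)|) @ \oo --> +oo.
Proof.
have Xcvg : forall j : 'I_n, (fun k => u k ord0 j) @ \oo --> v ord0 j.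
  move=> j; exact: (continuous_cvg _ (@coord_continuous R 1 n ord0 j v) huv).
have notU : ~ Uset v.
  move=> Uv; case: hv => _; apply; rewrite /interior /=.
  have Cc : forall i : 'I_n, (fun M : 'rV[R]_n => M ord0 i) @ v --> v ord0 i.
    by move=> i; exact: coord_continuous.
  have H1 : \forall M \near v, forall i : 'I_n, 0 < (M : 'rV[R]_n) ord0 i < 1.
    have Hi : forall i : 'I_n, \forall M \near v, 0 < (M : 'rV[R]_n) ord0 i < 1.
      move=> i; have /andP[h0 h1] := Uv.1 i.
      near=> M; apply/andP; split.
        by near: M; exact: (cvgr_gt _ (Cc i) 0 h0).
      by near: M; exact: (cvgr_lt _ (Cc i) 1 h1).
    exact: filter_forall Hi.
  have H2 : \forall M \near v, forall ij : 'I_n * 'I_n, (ij.1 < ij.2)%N ->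
      (M : 'rV[R]_n) ord0 ij.1 < M ord0 ij.2.
    have Hij : forall ij : 'I_n * 'I_n, \forall M \near v, (ij.1 < ij.2)%N ->
        (M : 'rV[R]_n) ord0 ij.1 < M ord0 ij.2.
      move=> -[i j] /=.
      case: (ltnP i j) => ij; last by near=> M.
      have hh : \forall M \near v, 0 < (M:'rV[R]_n) ord0 j - M ord0 i.
        by apply: (cvgr_gt _ (cvgB (Cc j) (Cc i))); rewrite subr_gt0; exact: Uv.2.
      by apply: filterS hh => M /=; rewrite subr_gt0 => h _.
    exact: filter_forall Hij.
  apply: filterS (filterI H1 H2) => M [h1 h2]; split => // i j ij.
  exact: (h2 (i, j) ij).
case: (pselect (exists i : 'I_n, v ord0 i <= 0)) => [hz|hpos].
  have [m [vm mmax]] := @ord_max _ _ hz.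
  have vpos : forall j : 'I_n, (m < j)%N -> 0 < v ord0 j.
    by move=> j mj; rewrite ltNge; apply/negP; exact: mmax j mj.
  exists m; apply/cvgryPge => A.
  pose g := fun j : 'I_n => if (m < j)%N then c / (v ord0 j / 2) else 0.
  have g0 : forall j, 0 <= g j.
    move=> j; rewrite /g; case: ifP => // mj; apply: divr_ge0; first exact: ltW.
    by apply: divr_ge0 => //; exact: ltW (vpos j mj).
  pose S := \sum_(j < n) g j.
  have S0 : 0 <= S by apply: sumr_ge0 => j _; exact: g0.
  pose M := `|A| + 2 * a + S + 1.
  have M0 : 0 < M by rewrite /M; have := normr_ge0 A; lra.
  have H1 : \forall k \near \oo, u k ord0 m < 1/2.
    by apply: (cvgr_lt _ (Xcvg m)); lra.
  have H2 : \forall k \near \oo, forall j : 'I_n, (m < j)%N ->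
      v ord0 j / 2 < u k ord0 j - u k ord0 m.
    have Hj : forall j : 'I_n, \forall k \near \oo, (m < j)%N ->
        v ord0 j / 2 < u k ord0 j - u k ord0 m.
      move=> j; case: (ltnP m j) => mj; last by near=> k.
      have hh : \forall k \near \oo, v ord0 j / 2 < u k ord0 j - u k ord0 m.
        by apply: (cvgr_gt _ (cvgB (Xcvg j) (Xcvg m))); have := vpos j mj; lra.
      by apply: filterS hh => k h _.
    exact: filter_forall Hj.
  have H3 : \forall k \near \oo, u k ord0 m < b / M.
    apply: (cvgr_lt _ (Xcvg m)); have : 0 < b / M by apply: divr_gt0.
    lra.
  near=> k.
  have [U1 U2] := hu k.
  have xm0 : 0 < u k ord0 m by have /andP[] := U1 m.
  have h1 : u k ord0 m < 1/2 by near: k.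
  have h2 : forall j : 'I_n, (m < j)%N ->
      v ord0 j / 2 < u k ord0 j - u k ord0 m by near: k.
  have h3 : u k ord0 m < b / M by near: k.
  have e1 : a / (1 - u k ord0 m) <= 2 * a.
    have -> : 2 * a = a / (1/2) by field.
    apply: divle => //; lra.
  have e2 : M <= b / u k ord0 m.
    have := divle hb xm0 (ltW h3).
    have -> : b / (b / M) = M by field; apply/andP; split; rewrite gt_eqF.
    by [].
  have e3 : - S <= \sum_(j < n | j != m) c / (u k ord0 m - u k ord0 j).
    apply: le_trans (_ : - \sum_(j < n | j != m) g j <= _).
      by rewrite lerN2; exact: sub_sum.
    rewrite -sumrN; apply: ler_sum => j jm.
    rewrite /g; case: (ltngtP m j) => mj.
    - have hj := h2 j mj.
      have -> : c / (u k ord0 m - u k ord0 j) = - (c / (u k ord0 j - u k ord0 m)).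
        by rewrite -mulrN -invrN opprB.
      rewrite lerN2; apply: divle => //; last exact: ltW.
      by apply: divr_gt0 => //; exact: vpos.
    - rewrite oppr0; apply: divr_ge0; first exact: ltW.
      by rewrite subr_ge0; apply: ltW; exact: U2 j m mj.
    - by exfalso; move: jm; rewrite (_ : j = m) ?eqxx //; apply: val_inj.
  rewrite /fcomp ler_normr; apply/orP; right.
  move: e2; rewrite /M => e2.
  have := normr_ge0 A; have := ler_norm A.
  lra.
have hpos' : forall i : 'I_n, 0 < v ord0 i.
  by move=> i; rewrite ltNge; apply/negP => h; apply: hpos; exists i.
have hQ : exists p : 'I_n, 1 <= v ord0 p \/
    exists q : 'I_n, (p < q)%N /\ v ord0 q <= v ord0 p.
  apply: contra_notP notU => nQ; split.
    move=> i; rewrite hpos' /= ltNge; apply/negP => h; apply: nQ; exists i; by left.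
  move=> i j ij; rewrite ltNge; apply/negP => h; apply: nQ; exists i; right; by exists j.
have [p [Qp pmin]] := @ord_min _ _ hQ.
have vlt : forall j : 'I_n, (j < p)%N -> v ord0 j < v ord0 p.
  move=> j jp; rewrite ltNge; apply/negP => h; apply: (pmin j jp); right; by exists p.
exists p; apply/cvgryPge => A.
pose g := fun j : 'I_n => if (j < p)%N then c / ((v ord0 p - v ord0 j) / 2) else 0.
have g0 : forall j, 0 <= g j.
  move=> j; rewrite /g; case: ifP => // jp; apply: divr_ge0; first exact: ltW.
  by apply: divr_ge0 => //; rewrite subr_ge0; exact: ltW (vlt j jp).
pose S := \sum_(j < n) g j.
have S0 : 0 <= S by apply: sumr_ge0 => j _; exact: g0.
have vp0 := hpos' p.
pose B := b / (v ord0 p / 2).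
have B0 : 0 <= B by apply: divr_ge0; [exact: ltW | apply: divr_ge0 => //; exact: ltW].
pose M := `|A| + B + S + 1.
have M0 : 0 < M by rewrite /M; have := normr_ge0 A; lra.
have H1 : \forall k \near \oo, v ord0 p / 2 < u k ord0 p.
  by apply: (cvgr_gt _ (Xcvg p)); lra.
have H2 : \forall k \near \oo, forall j : 'I_n, (j < p)%N ->
    (v ord0 p - v ord0 j) / 2 < u k ord0 p - u k ord0 j.
  have Hj : forall j : 'I_n, \forall k \near \oo, (j < p)%N ->
      (v ord0 p - v ord0 j) / 2 < u k ord0 p - u k ord0 j.
    move=> j; case: (ltnP j p) => jp; last by near=> k.
    have hh : \forall k \near \oo, (v ord0 p - v ord0 j) / 2 < u k ord0 p - u k ord0 j.
      by apply: (cvgr_gt _ (cvgB (Xcvg p) (Xcvg j))); have := vlt j jp; lra.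
    by apply: filterS hh => k h _.
  exact: filter_forall Hj.
have tb : forall k, (forall j : 'I_n, (j < p)%N ->
    (v ord0 p - v ord0 j) / 2 < u k ord0 p - u k ord0 j) ->
    forall j : 'I_n, j != p -> c / (u k ord0 p - u k ord0 j) <= g j.
  move=> k h2 j jp; have [U1 U2] := hu k.
  rewrite /g; case: (ltngtP j p) => pj.
  - apply: divle => //; last exact: ltW (h2 j pj).
    by apply: divr_gt0 => //; rewrite subr_gt0; exact: vlt.
  - have -> : c / (u k ord0 p - u k ord0 j) = - (c / (u k ord0 j - u k ord0 p)).
      by rewrite -mulrN -invrN opprB.
    rewrite oppr_le0; apply: divr_ge0; first exact: ltW.
    by rewrite subr_ge0; apply: ltW; exact: U2 p j pj.
  - by exfalso; move: jp; rewrite (_ : j = p) ?eqxx //; apply: val_inj.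
have HT : \forall k \near \oo, M - S <= a / (1 - u k ord0 p)
    - \sum_(j < n | j != p) c / (u k ord0 p - u k ord0 j).
  case: Qp => [v1|[q [pq vq]]].
    have H3 : \forall k \near \oo, 1 - u k ord0 p < a / M.
      apply: (cvgr_lt _ (cvgB (cvg_cst (1:R)) (Xcvg p))).
      have : 0 < a / M by apply: divr_gt0.
      lra.
    near=> k.
    have [U1 U2] := hu k.
    have h3 : 1 - u k ord0 p < a / M by near: k.
    have h2 : forall j : 'I_n, (j < p)%N ->
      (v ord0 p - v ord0 j) / 2 < u k ord0 p - u k ord0 j by near: k.
    have x1 : 0 < 1 - u k ord0 p by have /andP[_ ] := U1 p; rewrite subr_gt0.
    have e1 : M <= a / (1 - u k ord0 p).
      have := divle ha x1 (ltW h3).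
      have -> : a / (a / M) = M by field; apply/andP; split; rewrite gt_eqF.
      by [].
    have e2 : \sum_(j < n | j != p) c / (u k ord0 p - u k ord0 j) <= S.
      apply: le_trans (@sub_sum _ _ _ _ g0).
      by apply: ler_sum => j jp; exact: tb.
    lra.
  have H3 : \forall k \near \oo, u k ord0 q - u k ord0 p < c / M.
    apply: (cvgr_lt _ (cvgB (Xcvg q) (Xcvg p))).
    have : 0 < c / M by apply: divr_gt0.
    lra.
  near=> k.
  have [U1 U2] := hu k.
  have h3 : u k ord0 q - u k ord0 p < c / M by near: k.
  have h2 : forall j : 'I_n, (j < p)%N ->
    (v ord0 p - v ord0 j) / 2 < u k ord0 p - u k ord0 j by near: k.
  have x1 : 0 < 1 - u k ord0 p by have /andP[_ ] := U1 p; rewrite subr_gt0.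
  have xq : 0 < u k ord0 q - u k ord0 p by rewrite subr_gt0; exact: U2.
  have e1 : 0 <= a / (1 - u k ord0 p) by apply: divr_ge0; exact: ltW.
  have e3 : c / (u k ord0 p - u k ord0 q) <= - M.
    have -> : c / (u k ord0 p - u k ord0 q) = - (c / (u k ord0 q - u k ord0 p)).
      by rewrite -mulrN -invrN opprB.
    rewrite lerN2.
    have := divle hc xq (ltW h3).
    have -> : c / (c / M) = M by field; apply/andP; split; rewrite gt_eqF.
    by [].
  have qp : q != p by apply/eqP => e; move: pq; rewrite e ltnn.
  have e2 : \sum_(j < n | j != p) c / (u k ord0 p - u k ord0 j) <= - M + S.
    rewrite (bigD1 q) //=; apply: lerD => //.
    apply: le_trans (@sub_sum _ _ _ _ g0).
    by apply: ler_sum => j /andP[jp _]; exact: tb.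
  lra.
near=> k.
have [U1 U2] := hu k.
have h1 : v ord0 p / 2 < u k ord0 p by near: k.
have hT : M - S <= a / (1 - u k ord0 p)
    - \sum_(j < n | j != p) c / (u k ord0 p - u k ord0 j) by near: k.
have e1 : b / u k ord0 p <= B.
  by apply: divle => //; [apply: divr_gt0 | exact: ltW].
rewrite /fcomp ler_normr; apply/orP; left.
move: hT; rewrite /M => hT.
have := ler_norm A.
lra.
Unshelve. all: by end_near.
Qed.
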